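(* Let $H$ be a finitely realizable hypergroup and $N$ a normal sub-hypergroup of $H$. Then the quotient hypergroup $H/N$ is finitely realizable.
   Context: A hypergroup is a nonempty set $H$ with $*:H\times H\to P^*(H)$ (nonempty subsets), extended to subsets by $A*B=\bigcup_{a\in A,b\in B}a*b$, which is associative, has a unique identity $e$, unique inverses $h^{-1}$ with $e\in(h^{-1}*h)\cap(h*h^{-1})$, and is reversible ($c\in a*b\Rightarrow a\in c*b^{-1},\ b\in a^{-1}*c$). A sub-hypergroup $N$ is normal if $hN=Nh$ for all $h\in H$ (where $hN=\{h\}*N$). The quotient $H/N$ is the hypergroup on the set of cosets $\{hN:h\in H\}$ with $(aN)(bN)=\{cN: c\in aN*bN\}$. For a nonempty set $X$: $1_X$ is the diagonal, $p^*=\{(a,b):(b,a)\in p\}$, $xp=\{y:(x,y)\in p\}$. An association scheme on $X$ is a partition $S$ of $X\times X$ with $1_X\in S$, closed under $p\mapsto p^*$, such that for all $p,q,r\in S$ there is a cardinal $a_{pq}^r$ with $|yp\cap zq^*|=a_{pq}^r$ for all $y\in X$, $z\in yr$. $\mathbf{H}(S)$ is the hypergroup on $S$ with $p*q=\{r: a_{pq}^r\ge1\}$, identity $1_X$, inverse $p^*$. A hypergroup is finitely realizable if it is isomorphic to $\mathbf{H}(S)$ for some association scheme $S$ on a finite set $X$. *)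

(* Defs.v *)
From mathcomp Require Import all_boot.
Set Implicit Arguments.
Unset Strict Implicit.
Unset Printing Implicit Defensive.

(* A hyperoperation on T is encoded as a ternary relation:
   [mul a b c] means  c \in a * b. *)

Section Hypergroups.
Variable T : Type.
Variable mul : T -> T -> T -> Prop.

Definition is_identity (e : T) : Prop :=
  forall h x, (mul e h x <-> x = h) /\ (mul h e x <-> x = h).

Record is_hypergroup (e : T) (inv : T -> T) : Prop := {
  hg_nonempty : forall a b, exists c, mul a b c;
  hg_assoc : forall a b c x,
      (exists y, mul a b y /\ mul y c x) <-> (exists y, mul b c y /\ mul a y x);
  hg_id : is_identity e;
  hg_id_uniq : forall e', is_identity e' -> e' = e;
  hg_inv : forall h, mul (inv h) h e /\ mul h (inv h) e;
  hg_inv_uniq : forall h k, mul k h e -> mul h k e -> k = inv h;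
  hg_rev : forall a b c, mul a b c -> mul c (inv b) a /\ mul (inv a) c b
}.

Definition is_subhypergroup (inv : T -> T) (N : T -> Prop) : Prop :=
  (exists n, N n) /\
  (forall a b c, N a -> N b -> mul a b c -> N c) /\
  (forall a, N a -> N (inv a)).

Definition lcoset (N : T -> Prop) (h : T) : T -> Prop :=
  fun x => exists n, N n /\ mul h n x.
Definition rcoset (N : T -> Prop) (h : T) : T -> Prop :=
  fun x => exists n, N n /\ mul n h x.

Definition is_normal (inv : T -> T) (N : T -> Prop) : Prop :=
  is_subhypergroup inv N /\ forall h x, lcoset N h x <-> rcoset N h x.

Definition quot_carrier (N : T -> Prop) : Type :=
  {C : T -> Prop | exists h, C = lcoset N h}.

Definition quot_mul (N : T -> Prop) (A B C : quot_carrier N) : Prop :=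
  exists c, (exists a b, sval A a /\ sval B b /\ mul a b c) /\
            sval C = lcoset N c.

End Hypergroups.

Section Schemes.
Variable X : finType.

Definition rel_diag : {set X * X} := [set xy | xy.1 == xy.2].
Definition rel_tr (p : {set X * X}) : {set X * X} := [set xy | (xy.2, xy.1) \in p].
Definition nbr (p : {set X * X}) (x : X) : {set X} := [set y | (x, y) \in p].

Definition is_scheme (S : {set {set X * X}}) : Prop :=
  0 < #|X| /\
  partition S [set: X * X] /\
  rel_diag \in S /\
  (forall p, p \in S -> rel_tr p \in S) /\
  (forall p q r, p \in S -> q \in S -> r \in S ->
     exists a : nat, forall y z, (y, z) \in r ->
        #|nbr p y :&: nbr (rel_tr q) z| = a).

(* r \in p * q  in H(S)  iff  a_{pq}^r >= 1 *)
Definition scheme_mul (p q r : {set X * X}) : Prop :=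
  exists y z, (y, z) \in r /\ 0 < #|nbr p y :&: nbr (rel_tr q) z|.

End Schemes.

Definition finitely_realizable (T : Type) (mul : T -> T -> T -> Prop) : Prop :=
  exists (X : finType) (S : {set {set X * X}}),
    is_scheme S /\
    exists f : T -> {p : {set X * X} | p \in S},
      bijective f /\
      forall a b c, mul a b c <-> scheme_mul (sval (f a)) (sval (f b)) (sval (f c)).

(* Main.v *)
From Stdlib Require Import ClassicalEpsilon ProofIrrelevance FunctionalExtensionality PropExtensionality.
Require Import Defs.
From mathcomp Require Import all_boot.
Set Implicit Arguments. Unset Strict Implicit. Unset Printing Implicit Defensive.

Definition bP (P : Prop) : bool := if excluded_middle_informative P then true else false.
Lemma bPP (P : Prop) : reflect P (bP P).
Proof. rewrite /bP; case: excluded_middle_informative => H; by constructor. Qed.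

Lemma smulG (Y : finType) (p q r : {set Y * Y}) :
  scheme_mul p q r <-> exists x y w, [/\ (x, w) \in p, (w, y) \in q & (x, y) \in r].
Proof.
split.
- case=> x [y [xyr]]; rewrite card_gt0; case/set0Pn => w; rewrite !inE /= => /andP[h1 h2].
  by exists x, y, w.
- case=> x [y [w [h1 h2 h3]]]; exists x, y; split => //.
  rewrite card_gt0; apply/set0Pn; exists w; by rewrite !inE /= h1 h2.
Qed.

Lemma inj_surj_bij (A B : Type) (F : A -> B) :
  injective F -> (forall b, exists a, F a = b) -> bijective F.
Proof.
move=> Hi Hs; exists (fun b => proj1_sig (constructive_indefinite_description _ (Hs b))).
- move=> a; apply: Hi; exact: (proj2_sig (constructive_indefinite_description _ (Hs (F a)))).
- move=> b; exact: (proj2_sig (constructive_indefinite_description _ (Hs b))).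
Qed.

Section Quot.
Variables (T : Type) (mul : T -> T -> T -> Prop) (e : T) (inv : T -> T) (N : T -> Prop).
Hypothesis hg : is_hypergroup mul e inv.
Hypothesis hN : is_normal mul inv N.
Variables (X : finType) (S : {set {set X * X}}).
Hypothesis hS : is_scheme S.
Variable f : T -> {p : {set X * X} | p \in S}.
Hypothesis fbij : bijective f.
Hypothesis fmul : forall a b c, mul a b c <-> scheme_mul (sval (f a)) (sval (f b)) (sval (f c)).

Let R a := sval (f a).
Lemma R_S a : R a \in S. Proof. rewrite /R; by case: (f a). Qed.
Lemma hpart : partition S [set: X * X]. Proof. by case: hS => _ []. Qed.
Lemma S_non0 p : p \in S -> exists xy, xy \in p.
Proof.
move=> pS; have := hpart; rewrite /partition; case/and3P => _ _ Hn.
case: (eqVneq p set0) => [E|/set0Pn [xy Hxy]]; last by exists xy.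
exfalso; move: Hn; by rewrite -E pS.
Qed.
Lemma S_disj p q xy : p \in S -> q \in S -> xy \in p -> xy \in q -> p = q.
Proof.
move=> pS qS xp xq; have := hpart; rewrite /partition; case/and3P => _ /trivIsetP H _.
apply/eqP; apply/negPn/negP => /(H _ _ pS qS) /disjoint_setI0 D.
have : xy \in p :&: q by rewrite inE xp xq.
by rewrite D inE.
Qed.
Lemma S_cover xy : exists2 p, p \in S & xy \in p.
Proof.
have := hpart; rewrite /partition; case/and3P => /eqP C _ _.
have : xy \in cover S by rewrite C inE.
by case/bigcupP => p pS xp; exists p.
Qed.
Lemma R_inj a b : R a = R b -> a = b.
Proof. move=> E; apply: (bij_inj fbij); exact: val_inj. Qed.
Lemma R_surj p : p \in S -> exists a, R a = p.
Proof.
move=> pS; case: fbij => g fg gf; exists (g (exist _ p pS)).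
by rewrite /R gf.
Qed.
Lemma ex_cls xy : exists a, xy \in R a.
Proof. case: (S_cover xy) => p pS xp; case: (R_surj pS) => a Ea; exists a; by rewrite Ea. Qed.
Lemma uniq_cls xy a b : xy \in R a -> xy \in R b -> a = b.
Proof. move=> H1 H2; apply: R_inj; exact: (S_disj (R_S a) (R_S b) H1 H2). Qed.

Definition clsT xy : T := proj1_sig (constructive_indefinite_description _ (ex_cls xy)).
Lemma clsT_in xy : xy \in R (clsT xy).
Proof. exact: (proj2_sig (constructive_indefinite_description _ (ex_cls xy))). Qed.
Lemma clsT_eq xy a : xy \in R a -> clsT xy = a.
Proof. move=> H; exact: uniq_cls (clsT_in xy) H. Qed.

Lemma smulP (p q r : {set X * X}) :
  scheme_mul p q r <-> exists x y w, [/\ (x, w) \in p, (w, y) \in q & (x, y) \in r].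
Proof.
split.
- case=> x [y [xyr]]; rewrite card_gt0; case/set0Pn => w; rewrite !inE /= => /andP[h1 h2].
  by exists x, y, w.
- case=> x [y [w [h1 h2 h3]]]; exists x, y; split => //.
  rewrite card_gt0; apply/set0Pn; exists w; by rewrite !inE /= h1 h2.
Qed.

Lemma mulP a b c :
  mul a b c <-> exists x y w, [/\ (x, w) \in R a, (w, y) \in R b & (x, y) \in R c].
Proof. rewrite fmul; exact: smulP. Qed.

Lemma mulK a b c x y : mul a b c -> (x, y) \in R c ->
  exists w, (x, w) \in R a /\ (w, y) \in R b.
Proof.
move=> H xyc; move/fmul: (H) => [x0 [y0 [xy0 pos]]].
case: hS => _ [_ [_ [_ Hc]]].
case: (Hc _ _ _ (R_S a) (R_S b) (R_S c)) => k Hk.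
have := Hk _ _ xyc; rewrite -(Hk _ _ xy0) => E.
move: pos; rewrite -E card_gt0 => /set0Pn [w]; rewrite !inE /= => /andP[h1 h2].
by exists w.
Qed.

Lemma diag_S : rel_diag X \in S. Proof. by case: hS => _ [_ []]. Qed.
Lemma tr_S p : p \in S -> rel_tr p \in S. Proof. by case: hS => _ [_ [_ []]] => H _; apply: H. Qed.

Lemma R_e x y : (x, y) \in R e <-> x = y.
Proof.
case: (R_surj diag_S) => a0 Ea0.
have Hd u v : (u, v) \in R a0 = (u == v) by rewrite Ea0 inE.
have id0 : is_identity mul a0.
  move=> h z; split; split.
  - case/mulP => x1 [y1 [w [h1 h2 h3]]]; move: h1; rewrite Hd => /eqP E; subst w.
    exact: uniq_cls h3 h2.
  - move=> ->; apply/mulP; case: (S_non0 (R_S h)) => [[u v] uv].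
    by exists u, v, u; rewrite Hd eqxx.
  - case/mulP => x1 [y1 [w [h1 h2 h3]]]; move: h2; rewrite Hd => /eqP E; subst w.
    exact: uniq_cls h3 h1.
  - move=> ->; apply/mulP; case: (S_non0 (R_S h)) => [[u v] uv].
    by exists u, v, v; rewrite Hd eqxx.
have E := hg_id_uniq hg id0; subst a0.
by rewrite Hd; split => [/eqP|->].
Qed.

Lemma R_inv a x y : (x, y) \in R (inv a) <-> (y, x) \in R a.
Proof.
case: (R_surj (tr_S (R_S a))) => k Ek.
have Hk u v : (u, v) \in R k = ((v, u) \in R a) by rewrite Ek inE.
have -> : inv a = k.
  symmetry; apply: (hg_inv_uniq hg).
  - case: (S_non0 (R_S a)) => [[u v] uv]; apply/mulP.
    exists v, v, u; split => //; [by rewrite Hk | by apply/R_e].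
  - case: (S_non0 (R_S a)) => [[u v] uv]; apply/mulP.
    exists u, u, v; split => //; [by rewrite Hk | by apply/R_e].
by rewrite Hk.
Qed.

Definition Ep x y := exists n, N n /\ (x, y) \in R n.
Lemma Ne : N e.
Proof.
case: hN => [[[n Nn] [Hcl Hinv]] _].
exact: (Hcl _ _ _ (Hinv _ Nn) Nn (proj1 (hg_inv hg n))).
Qed.
Lemma N_inv n : N n -> N (inv n). Proof. by case: hN => [[_ [_ H]] _]; apply: H. Qed.
Lemma N_cl a b c : N a -> N b -> mul a b c -> N c.
Proof. by case: hN => [[_ [H _]] _]; apply: H. Qed.
Lemma Erefl x : Ep x x. Proof. exists e; split; [exact: Ne | exact/R_e]. Qed.
Lemma Esym x y : Ep x y -> Ep y x.
Proof. case=> n [Nn H]; exists (inv n); split; [exact: N_inv | exact/R_inv]. Qed.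
Lemma Etrans x y z : Ep x y -> Ep y z -> Ep x z.
Proof.
case=> n [Nn H1] [m [Nm H2]]; exists (clsT (x, z)); split; last exact: clsT_in.
apply: (N_cl Nn Nm); apply/mulP; exists x, z, y; split => //; exact: clsT_in.
Qed.


Definition dc c c' := exists n m u, [/\ N n, N m, mul n c' u & mul u m c].

Lemma Lm c c' x y : dc c c' -> (x, y) \in R c ->
  exists x' y', [/\ Ep x x', Ep y y' & (x', y') \in R c'].
Proof.
case=> n [m [u [Nn Nm H1 H2]]] xy.
case: (mulK H2 xy) => w [xw wy].
case: (mulK H1 xw) => v [xv vw].
exists v, w; split => //; [by exists n | apply: Esym; by exists m].
Qed.

Lemma Mm c c' x y x' y' : (x, y) \in R c -> Ep x x' -> Ep y y' -> (x', y') \in R c' -> dc c c'.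
Proof.
move=> xy [n [Nn xx]] [m [Nm yy]] xy'.
exists n, (inv m), (clsT (x, y')); split => //; first exact: N_inv.
- apply/mulP; exists x, y', x'; split => //; exact: clsT_in.
- apply/mulP; exists x, y, y'; split => //; [exact: clsT_in | exact/R_inv].
Qed.

Lemma dc_sym c c' : dc c c' -> dc c' c.
Proof.
case=> n [m [u [Nn Nm H1 H2]]].
have [_ A1] := hg_rev hg H1.
have [A2 _] := hg_rev hg H2.
have [y [Y1 Y2]] : exists y, mul (inv n) c y /\ mul y (inv m) c'.
  apply/(hg_assoc hg); by exists u.
exists (inv n), (inv m), y; split => //; exact: N_inv.
Qed.

Lemma dc_refl c : dc c c.
Proof.
exists e, e, c; split; try exact: Ne.
- exact: (proj2 (proj1 (hg_id hg c c)) erefl).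
- exact: (proj2 (proj2 (hg_id hg c c)) erefl).
Qed.

Definition Eb x y := bP (Ep x y).
Definition Qs := [set [set y | Eb x y] | x in [set: X]].
Definition Qt := {A : {set X} | A \in Qs}.
Definition pi (x : X) : Qt := exist _ [set y | Eb x y] (imset_f _ (in_setT x)).

Lemma piE x y : pi x = pi y <-> Ep x y.
Proof.
split.
- move/(congr1 val) => /= /setP /(_ y); rewrite !inE.
  have : Eb y y by apply/bPP; exact: Erefl.
  by move=> -> /bPP.
- move=> H; apply: val_inj => /=; apply/setP => z; rewrite !inE.
  apply/bPP/bPP => H'; [apply: Etrans (Esym H) H' | exact: Etrans H H'].
Qed.

Lemma pi_surj (U : Qt) : exists x, pi x = U.
Proof.
case: U => A HA; case/imsetP: (HA) => x _ E; exists x; apply: val_inj => /=; by rewrite E.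
Qed.

Definition img (p : {set X * X}) : {set Qt * Qt} := [set (pi xy.1, pi xy.2) | xy in p].

Lemma imgP c x y : (pi x, pi y) \in img (R c) <->
  exists x' y', [/\ Ep x x', Ep y y' & (x', y') \in R c].
Proof.
split.
- case/imsetP => [[x1 y1]] H E; have E1 := congr1 fst E; have E2 := congr1 snd E.
  simpl in E1, E2; exists x1, y1; split => //; apply/piE; [exact: E1 | exact: E2].
- case=> x' [y' [E1 E2 H]]; apply/imsetP; exists (x', y') => //.
  by rewrite /= (proj2 (piE _ _) E1) (proj2 (piE _ _) E2).
Qed.

Lemma img_eq c c' : dc c c' -> img (R c) = img (R c').
Proof.
move=> H.
have gen d d' : dc d d' -> forall U V, (U, V) \in img (R d) -> (U, V) \in img (R d').
  move=> Hd U V; case: (pi_surj U) => x <-; case: (pi_surj V) => y <-.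
  case/imgP => x1 [y1 [E1 E2 xy1]]; case: (Lm Hd xy1) => x2 [y2 [F1 F2 xy2]].
  apply/imgP; exists x2, y2; split => //; exact: Etrans _ F1 || exact: Etrans E2 F2.
apply/setP => [[U V]]; apply/idP/idP; [exact: gen | apply: gen; exact: dc_sym].
Qed.

Lemma img_meet c c' x y : (pi x, pi y) \in img (R c) -> (pi x, pi y) \in img (R c') ->
  img (R c) = img (R c').
Proof.
case/imgP => x1 [y1 [E1 E2 H1]]; case/imgP => x2 [y2 [F1 F2 H2]].
apply: img_eq; apply: (Mm H1 _ _ H2); apply: Etrans (Esym _) _; eassumption.
Qed.

Lemma dc_img c c' : img (R c) = img (R c') -> dc c c'.
Proof.
move=> E; case: (S_non0 (R_S c)) => [[x y] xy].
have : (pi x, pi y) \in img (R c) by apply/imgP; exists x, y; split => //; exact: Erefl.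
rewrite E; case/imgP => x' [y' [E1 E2 H]]; exact: Mm xy E1 E2 H.
Qed.

Lemma lcoset_dc h x : lcoset mul N h x <-> dc x h.
Proof.
split.
- case=> n [Nn H]; exists e, n, h; split => //; first exact: Ne.
  exact: (proj2 (proj1 (hg_id hg h h)) erefl).
- case=> n [m [u [Nn Nm H1 H2]]].
  have : rcoset mul N h u by exists n.
  move/(proj2 (proj2 hN h u)) => [n' [Nn' H3]].
  have [y [Y1 Y2]] : exists y, mul n' m y /\ mul h y x.
    apply/(hg_assoc hg); by exists u.
  exists y; split => //; exact: N_cl Nn' Nm Y1.
Qed.

Lemma lcoset_img h h' : lcoset mul N h = lcoset mul N h' <-> img (R h) = img (R h').
Proof.
split.
- move=> E; apply: img_eq; apply/lcoset_dc; rewrite -E; apply/lcoset_dc; exact: dc_refl.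
- move=> E; apply: functional_extensionality => x; apply: propositional_extensionality.
  split => /lcoset_dc H; apply/lcoset_dc; apply: dc_img.
  + by rewrite (img_eq H).
  + by rewrite (img_eq H).
Qed.


Lemma card_sum (P : pred X) : #|[set w | P w]| = \sum_w P w.
Proof. rewrite -sum1dep_card big_mkcond /=; apply: eq_bigr => w _; by case: (P w). Qed.

Lemma S_cls s u v : s \in S -> (u, v) \in s -> s = R (clsT (u, v)).
Proof. move=> sS uv; exact: S_disj sS (R_S _) uv (clsT_in _). Qed.

Lemma card_decomp (Phi : {set X * X} -> {set X * X} -> bool) x y :
  #|[set w | Phi (R (clsT (x, w))) (R (clsT (w, y)))]| =
  \sum_(s in S) \sum_(t in S) Phi s t * #|nbr s x :&: nbr (rel_tr t) y|.
Proof.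
rewrite card_sum.
have -> : \sum_(s in S) \sum_(t in S) Phi s t * #|nbr s x :&: nbr (rel_tr t) y| =
   \sum_(s in S) \sum_(t in S) \sum_w Phi s t * (((x, w) \in s) && ((w, y) \in t)).
  apply: eq_bigr => s _; apply: eq_bigr => t _; rewrite -big_distrr /=; congr (_ * _).
  have -> : nbr s x :&: nbr (rel_tr t) y = [set w | ((x, w) \in s) && ((w, y) \in t)].
    by apply/setP => w; rewrite !inE.
  exact: card_sum.
rewrite (eq_bigr (fun s => \sum_w \sum_(t in S) Phi s t * (((x, w) \in s) && ((w, y) \in t))));
  last by move=> s _; rewrite exchange_big.
rewrite exchange_big /=; apply: eq_bigr => w _.
rewrite (bigD1 (R (clsT (x, w)))) ?R_S //=.
rewrite [X in _ + X]big1 ?addn0; last first.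
  move=> s /andP[sS ne]; apply: big1 => t _.
  case xs: ((x, w) \in s); last by rewrite muln0.
  by move: ne; rewrite -(S_cls sS xs) eqxx.
rewrite (bigD1 (R (clsT (w, y)))) ?R_S //=.
rewrite [X in _ + X]big1 ?addn0; last first.
  move=> t /andP[tS ne].
  case yt: ((w, y) \in t); last by rewrite andbF muln0.
  by move: ne; rewrite -(S_cls tS yt) eqxx.
by rewrite !clsT_in muln1.
Qed.

Lemma G_const (Phi : {set X * X} -> {set X * X} -> bool) r x y x' y' :
  r \in S -> (x, y) \in r -> (x', y') \in r ->
  #|[set w | Phi (R (clsT (x, w))) (R (clsT (w, y)))]| =
  #|[set w | Phi (R (clsT (x', w))) (R (clsT (w, y')))]|.
Proof.
move=> rS h1 h2; rewrite !card_decomp; apply: eq_bigr => s sS; apply: eq_bigr => t tS.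
case: hS => _ [_ [_ [_ Hc]]].
case: (Hc s t r sS tS rS) => k Hk.
by rewrite (Hk _ _ h1) (Hk _ _ h2).
Qed.

Lemma inimg c x y : ((pi x, pi y) \in img (R c)) = (img (R (clsT (x, y))) == img (R c)).
Proof.
have h0 : (pi x, pi y) \in img (R (clsT (x, y))).
  apply/imgP; exists x, y; split; [exact: Erefl | exact: Erefl | exact: clsT_in].
apply/idP/eqP => [H | <-] //; exact: img_meet h0 H.
Qed.

Lemma fib x x' : #|[set w | pi w == pi x]| = #|[set w | pi w == pi x']|.
Proof.
pose Phi (s t : {set X * X}) := img s == img (R e).
have E z : [set w | pi w == pi z] = [set w | Phi (R (clsT (z, w))) (R (clsT (w, z)))].
  apply/setP => w; rewrite !inE /Phi -inimg.
  apply/eqP/idP.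
  - move=> /esym /piE H; apply/imgP; exists z, z; split; [exact: Erefl | exact: Esym | exact/R_e].
  - case/imgP => x1 [y1 [E1 E2 /R_e E3]]; subst y1; apply/esym/piE.
    exact: Etrans E1 (Esym E2).
rewrite !E; apply: (G_const _ (R_S e)); exact/R_e.
Qed.

Lemma claim1 (P P' : {set Qt * Qt}) x y :
  #|[set w | ((pi x, pi w) \in P) && ((pi w, pi y) \in P')]| =
  #|nbr P (pi x) :&: nbr (rel_tr P') (pi y)| * #|[set w | pi w == pi x]|.
Proof.
set W := nbr P (pi x) :&: nbr (rel_tr P') (pi y).
have -> : [set w | ((pi x, pi w) \in P) && ((pi w, pi y) \in P')] = [set w | pi w \in W].
  by apply/setP => w; rewrite !inE.
rewrite -sum1dep_card (partition_big pi (mem W)) //= -sum_nat_const.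
apply: eq_bigr => U UW.
rewrite (eq_bigl (fun w => pi w == U)); last first.
  move=> w /=; case: (eqVneq (pi w) U) => [->|_]; by rewrite ?UW ?andbF ?andbT ?eqxx.
rewrite sum1dep_card; case: (pi_surj U) => z <-; exact: fib.
Qed.

Definition Sq := [set img p | p in S].

Lemma Sq_mem P : P \in Sq -> exists c, P = img (R c).
Proof. case/imsetP => p pS ->; case: (R_surj pS) => c <-; by exists c. Qed.
Lemma img_Sq c : img (R c) \in Sq. Proof. exact: imset_f (R_S c). Qed.

Lemma pi_surj2 (U V : Qt) : exists x y, U = pi x /\ V = pi y.
Proof. case: (pi_surj U) => x <-; case: (pi_surj V) => y <-; by exists x, y. Qed.

Lemma Sq_scheme : is_scheme Sq.
Proof.
case: (hS) => /card_gt0P [z0 _] _.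
split; first by apply/card_gt0P; exists (pi z0).
split.
  apply/and3P; split.
  - apply/eqP/setP => [[U V]]; rewrite in_setT; apply/bigcupP.
    case: (pi_surj2 U V) => x [y [-> ->]].
    exists (img (R (clsT (x, y)))); first exact: img_Sq.
    apply/imgP; exists x, y; split; [exact: Erefl | exact: Erefl | exact: clsT_in].
  - apply/trivIsetP => A B /Sq_mem [c ->] /Sq_mem [c' ->] ne.
    rewrite -setI_eq0; apply/eqP/setP => [[U V]]; rewrite !inE.
    case: (pi_surj2 U V) => x [y [-> ->]].
    apply/negbTE/negP => /andP[h1 h2]; move: ne; by rewrite (img_meet h1 h2) eqxx.
  - apply/negP => /imsetP [p pS E].
    case: (S_non0 pS) => [[x y] xy].
    have : (pi x, pi y) \in img p by apply/imsetP; exists (x, y).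
    by rewrite -E inE.
split.
  have -> : rel_diag Qt = img (R e); last exact: img_Sq.
  apply/setP => [[U V]]; rewrite inE /=; case: (pi_surj2 U V) => x [y [-> ->]].
  apply/idP/idP.
  - move/eqP/piE => H; apply/imgP; exists x, x; split; [exact: Erefl | exact: Esym | exact/R_e].
  - case/imgP=> x1 [y1 [E1 E2 /R_e E3]]; subst y1; apply/eqP/piE; exact: Etrans E1 (Esym E2).
split.
  move=> P /Sq_mem [c ->].
  have -> : rel_tr (img (R c)) = img (R (inv c)); last exact: img_Sq.
  apply/setP => [[U V]]; rewrite inE /=; case: (pi_surj2 U V) => x [y [-> ->]].
  apply/idP/idP.
  - case/imgP=> y1 [x1 [E1 E2 H]]; apply/imgP; exists x1, y1; split => //; exact/R_inv.
  - case/imgP=> x1 [y1 [E1 E2 /R_inv H]]; apply/imgP; exists y1, x1; split => //.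
move=> P P' Rr /Sq_mem [a ->] /Sq_mem [b ->] /Sq_mem [c ->].
case: (S_non0 (R_S c)) => [[x0 y0] xy0].
exists #|nbr (img (R a)) (pi x0) :&: nbr (rel_tr (img (R b))) (pi y0)|.
move=> U V /imsetP [[x y] xy [-> ->]] /=.
pose Phi (s t : {set X * X}) := (img s == img (R a)) && (img t == img (R b)).
have E z z' : [set w | ((pi z, pi w) \in img (R a)) && ((pi w, pi z') \in img (R b))] =
              [set w | Phi (R (clsT (z, w))) (R (clsT (w, z')))].
  by apply/setP => w; rewrite !inE !inimg.
have := G_const Phi (R_S c) xy xy0.
rewrite -!E !claim1 (fib x x0) => /eqP; rewrite eqn_pmul2r //.
  by move/eqP.
apply/card_gt0P; exists x0; by rewrite inE.
Qed.

Definition hC (C : quot_carrier mul N) : T :=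
  proj1_sig (constructive_indefinite_description _ (proj2_sig C)).
Lemma hC_spec C : sval C = lcoset mul N (hC C).
Proof. exact: (proj2_sig (constructive_indefinite_description _ (proj2_sig C))). Qed.

Definition Fq (C : quot_carrier mul N) : {P | P \in Sq} := exist _ (img (R (hC C))) (img_Sq _).

Lemma Fq_bij : bijective Fq.
Proof.
apply: inj_surj_bij.
- move=> C C' /(congr1 val) /= /lcoset_img E.
  have : sval C = sval C' by rewrite !hC_spec E.
  case: C C' {E} => [c pc] [c' pc'] /= E; subst c'; congr exist; exact: proof_irrelevance.
- move=> [P PS]; case: (Sq_mem PS) => c Ec.
  exists (exist _ (lcoset mul N c) (ex_intro _ c erefl)); apply: val_inj => /=.
  rewrite Ec; apply/lcoset_img; by rewrite -hC_spec.
Qed.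

Lemma Fq_mul A B C : quot_mul A B C <-> scheme_mul (sval (Fq A)) (sval (Fq B)) (sval (Fq C)).
Proof.
simpl; split.
- case=> c [[a [b [Aa [Bb Hab]]]] EC]; apply/smulG.
  move: Aa Bb; rewrite !hC_spec => /lcoset_dc Aa /lcoset_dc Bb.
  have Cc : dc c (hC C) by apply/lcoset_dc; rewrite -hC_spec EC; apply/lcoset_dc; exact: dc_refl.
  case: (S_non0 (R_S c)) => [[x y] xy].
  case: (mulK Hab xy) => w [xw wy].
  exists (pi x), (pi y), (pi w); rewrite -(img_eq Aa) -(img_eq Bb) -(img_eq Cc).
  split; apply/imgP; [exists x, w | exists w, y | exists x, y]; split => //; exact: Erefl.
- move/smulG; case=> U [V [W]]; case: (pi_surj2 U V) => x [y [-> ->]]; case: (pi_surj W) => w <-.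
  case=> /imgP [x1 [w1 [E1 F1 H1]]] /imgP [w2 [y2 [F2 E2 H2]]] /imgP [x3 [y3 [E3 E4 H3]]].
  have [n [Nn wn]] : Ep w1 w2 by apply: Etrans (Esym F1) F2.
  set t := clsT (x1, w2).
  have mt : mul (hC A) n t by apply/mulP; exists x1, w2, w1; split => //; exact: clsT_in.
  set c := clsT (x1, y2).
  have mc : mul t (hC B) c by apply/mulP; exists x1, y2, w2; split => //; exact: clsT_in.
  exists c; split.
  + exists t, (hC B); split; [|split => //].
    * rewrite hC_spec; apply/lcoset_dc; exists e, n, (hC A); split => //; first exact: Ne.
      exact: (proj2 (proj1 (hg_id hg _ _)) erefl).
    * rewrite hC_spec; apply/lcoset_dc; exact: dc_refl.
  + rewrite hC_spec; apply/lcoset_img; apply: (@img_meet _ _ x y).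
    * apply/imgP; exists x3, y3; split => //.
    * apply/imgP; exists x1, y2; split => //; exact: clsT_in.
Qed.

Lemma quot_real : finitely_realizable (@quot_mul T mul N).
Proof.
exists (Qt : finType), Sq; split; first exact: Sq_scheme.
exists Fq; split; [exact: Fq_bij | exact: Fq_mul].
Qed.

End Quot.

Theorem proposition4p7 (T : Type) (mul : T -> T -> T -> Prop) (e : T)
    (inv : T -> T) (N : T -> Prop) :
  is_hypergroup mul e inv ->
  finitely_realizable mul ->
  is_normal mul inv N ->
  finitely_realizable (@quot_mul T mul N).
Proof.
move=> hg [X [S [hS [f [fbij fmul]]]]] hN.
exact: (quot_real hg hN hS fbij fmul).
Qed.
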